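(* For every integer $n\ge 1$, \[C_n=\sum_{k=0}^{n-1}\left(\binom{n-1}{k}^{2}-\binom{n+1}{k+2}\binom{n-3}{k-2}\right),\] where $C_n$ is the $n$th Catalan number and $\binom{a}{b}=0$ whenever $b<0$. *)

(* Defs.v *)
From mathcomp Require Import all_boot all_order all_algebra.
Set Implicit Arguments. Unset Strict Implicit. Unset Printing Implicit Defensive.
Import Order.TTheory GRing.Theory Num.Theory.
Local Open Scope ring_scope.

Definition catalan (n : nat) : nat := ('C(n.*2, n) %/ n.+1)%N.

(* Binomial coefficient with integer arguments: binom(a, b) = 0 when b < 0;
   for b >= 0 it is the generalized binomial a(a-1)...(a-b+1)/b!, i.e.
   'C(a, b) for a >= 0 and (-1)^b 'C(b - a - 1, b) for a < 0. *)
Definition binomz (a b : int) : int :=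
  match b with
  | Negz _ => 0
  | Posz b' =>
      match a with
      | Posz a' => ('C(a', b'))%:Z
      | Negz a' => (-1) ^+ b' * ('C(b' + a', b'))%:Z
      end
  end.

(* Main.v *)
Require Import Defs.
From mathcomp Require Import all_boot all_order all_algebra.
From mathcomp Require Import zify.
Import Order.TTheory GRing.Theory Num.Theory.
Local Open Scope ring_scope.

Lemma sq_sum (m : nat) : (\sum_(0 <= k < m.+1) 'C(m, k) ^ 2 = 'C(m.*2, m))%N.
Proof.
rewrite -addnn -(binomial.Vandermonde m m m) big_mkord; apply: eq_bigr => j _.
by rewrite bin_sub ?muln1 // -ltnS.
Qed.

Definition bterm (m k : nat) : nat :=
  if (2 <= k)%N then ('C(m.+2, k.+2) * 'C(m - 2, k - 2))%N else 0%N.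

Lemma b_sum (m : nat) : (\sum_(0 <= k < m.+1) bterm m k = 'C(m.*2, m.+2))%N.
Proof.
case: m => [|[|p]]; first by rewrite big_nat1.
  by rewrite big_nat_recr //= big_nat1.
rewrite big_nat_recl // big_nat_recl //= /bterm /= add0n.
have -> : (p.+2.*2 = p + (p + 4))%N by lia.
rewrite -(bin_sub (n:=p + (p+4)) (m:=p.+4)); last by lia.
have -> : (p + (p + 4) - p.+4 = p)%N by lia.
rewrite -binomial.Vandermonde big_mkord; apply: eq_bigr => [[j Hj]] _ /=.
have -> : (p.+2 - 2 = p)%N by lia.
rewrite mulnC; congr (_ * _)%N; first by congr 'C(_, _); lia.
rewrite -(bin_sub (n := p+4) (m := p - j)); last by lia.
congr 'C(_, _); lia.
Qed.

Lemma cat_id (m : nat) : (catalan m.+1 + 'C(m.*2, m.+2) = 'C(m.*2, m))%N.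
Proof.
rewrite /catalan.
set c := 'C(m.*2, m). set d := 'C(m.*2, m.+1). set e := 'C(m.*2, m.+2).
set X := 'C(m.+1.*2, m.+1). set Y := 'C((m.*2).+1, m).
have h1 : (m.+1 * X = (m.+1.*2) * Y)%N.
  by rewrite /X /Y (mul_bin_diag (m.+1.*2) m) .
have h2 : (Y = c + d)%N.
  rewrite /Y -(bin_sub (n := (m.*2).+1)); last by lia.
  have -> : ((m.*2).+1 - m = m.+1)%N by lia.
  by rewrite binS addnC.
have h3 : (m.+1 * d = m * c)%N.
  rewrite /d /c mul_bin_left; congr (_ * _)%N; lia.
have h4 : (m.+2 * e = (m.*2 - m.+1) * d)%N by rewrite /e /d mul_bin_left.
have hX : (X = c.*2 + d.*2)%N.
  apply/eqP; rewrite -(eqn_pmul2l (ltn0Sn m)) h1 h2; apply/eqP; lia.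
have hce : (e <= c)%N.
  clear -h3 h4; clearbody c d e.
  have : (m.+2 * e <= m.+2 * c)%N.
    rewrite h4. apply: (@leq_trans (m.+1 * d)); first by apply: leq_mul => //; lia.
    rewrite h3; apply: leq_mul => //; lia.
  move=> H; nia.
have hXe : (X = m.+2 * (c - e))%N.
  apply/eqP; rewrite -(eqn_pmul2l (ltn0Sn m)); apply/eqP.
  rewrite hX.
  have -> : (m.+1 * (m.+2 * (c - e)) = m.+1 * (m.+2 * c) - m.+1 * (m.+2 * e))%N.
    by rewrite !mulnBr.
  rewrite h4.
  have h5 : ((m.*2 - m.+1) * (m.+1 * d) = (m.*2 - m.+1) * (m * c))%N by rewrite h3.
  clear -h5 h3. clearbody c d. rewrite [(m.+1 * ((_) * d))%N]mulnCA h5.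
  case: m h3 {h5} => [|k] h3 /=; first by rewrite /= !mul0n subn0 !mul1n; lia.
  have -> : (k.+1.*2 - k.+2 = k)%N by lia.
  nia.
rewrite hXe mulKn //; lia.
Qed.

Lemma term_eq (m k : nat) : (k < m.+1)%N ->
  binomz ((m.+1)%:Z - 1) k%:Z ^+ 2
      - binomz ((m.+1)%:Z + 1) (k%:Z + 2) * binomz ((m.+1)%:Z - 3) (k%:Z - 2)
  = ('C(m, k) ^ 2)%N%:Z - (bterm m k)%:Z.
Proof.
move=> hk.
have -> : (m.+1)%:Z - 1 = m%:Z by lia.
have -> : (m.+1)%:Z + 1 = (m.+2)%:Z by lia.
have -> : k%:Z + 2 = (k.+2)%:Z by lia.
rewrite /= /bterm; congr (_ - _).
case: k hk => [|[|k]] hk; [by rewrite /= mulr0 | by rewrite /= mulr0 |].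
have -> : (k.+2)%:Z - 2 = k%:Z by lia.
have -> : (m.+1)%:Z - 3 = (m - 2)%N%:Z by lia.
by rewrite /= PoszM; congr (_ * _); congr Posz; congr 'C(_, _); lia.
Qed.

Lemma sumz (n : nat) (F : nat -> nat) :
  \sum_(0 <= k < n) (F k)%:Z = (\sum_(0 <= k < n) F k)%N%:Z.
Proof.
elim: n => [|n IH]; first by rewrite !big_geq.
by rewrite !big_nat_recr //= IH PoszD.
Qed.

Theorem mainTheorem7 (n : nat) (hn : (1 <= n)%N) :
  (catalan n)%:Z =
  \sum_(0 <= k < n)
     (binomz (n%:Z - 1) k%:Z ^+ 2
      - binomz (n%:Z + 1) (k%:Z + 2) * binomz (n%:Z - 3) (k%:Z - 2)).
Proof.
case: n hn => [|m] // _.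
rewrite (eq_big_nat _ _ (F2 := fun k => ('C(m, k) ^ 2)%N%:Z - (bterm m k)%:Z)); last first.
  by move=> k /andP[_ hk]; apply: term_eq.
rewrite sumrB !sumz sq_sum b_sum -cat_id PoszD addrK.
by [].
Qed.
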